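(* Let $T\in\mathbb{T}$. Then every alternating path in $T$ has length at most three.
   Context: $\mathbb{T}$ is the class of simple undirected weighted trees $T$ (nonzero real weights on edges) such that (i) $T$ has at least one non-pendant vertex, and (ii) every non-pendant vertex of $T$ is adjacent to at least one pendant vertex (a vertex of degree one). Given a maximum matching $M$ of $T$, a path is alternating with respect to $M$ if its edges are alternately in $M$ and not in $M$, with first and last edges in $M$; an alternating path in $T$ is a path alternating with respect to some maximum matching of $T$. *)

(* Defs.v *)
From HB Require Import structures.
From mathcomp Require Import all_boot all_order all_algebra.
From mathcomp Require Import reals.
Set Implicit Arguments. Unset Strict Implicit. Unset Printing Implicit Defensive.
Import Order.TTheory GRing.Theory Num.Theory.

(* A simple undirected graph on a finite vertex type V is a symmetric,
   irreflexive relation e : rel V.  Edges are 2-element vertex sets. *)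

Section Graphs.
Variable V : finType.
Variable e : rel V.

Definition simple_graph : Prop := symmetric e /\ irreflexive e.

Definition is_edge (E : {set V}) : bool :=
  [exists x, exists y, e x y && (E == [set x; y])].

Definition is_cycle (x0 : V) (p : seq V) : bool :=
  [&& uniq (x0 :: p), 2 <= size p, path e x0 p & e (last x0 p) x0].

Definition connected : Prop := forall x y : V, connect e x y.

Definition acyclic : Prop := forall x0 p, ~~ is_cycle x0 p.

Definition is_tree : Prop := simple_graph /\ connected /\ acyclic.

Definition degree (x : V) : nat := #|[set y | e x y]|.

Definition pendant (x : V) : bool := degree x == 1.

Definition matching (M : {set {set V}}) : Prop :=
  (forall E, E \in M -> is_edge E) /\
  (forall E F, E \in M -> F \in M -> E != F -> [disjoint E & F]).

Definition maximum_matching (M : {set {set V}}) : Prop :=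
  matching M /\ (forall M', matching M' -> #|M'| <= #|M|).

(* A (simple) path given by its vertex sequence x0 :: p; its length is size p,
   its i-th edge (i < size p) is {v_i, v_(i+1)}. *)
Definition is_path (x0 : V) (p : seq V) : bool := uniq (x0 :: p) && path e x0 p.

Definition path_edge (x0 : V) (p : seq V) (i : nat) : {set V} :=
  [set nth x0 (x0 :: p) i; nth x0 (x0 :: p) i.+1].

(* alternating w.r.t. M: edges alternately in M and not in M, first and last in M;
   equivalently the i-th edge is in M iff i is even, and the length is odd. *)
Definition alternating_wrt (M : {set {set V}}) (x0 : V) (p : seq V) : Prop :=
  is_path x0 p /\ odd (size p) /\
  (forall i, i < size p -> (path_edge x0 p i \in M) = ~~ odd i).

Definition alternating_path (x0 : V) (p : seq V) : Prop :=
  exists M, maximum_matching M /\ alternating_wrt M x0 p.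

End Graphs.

Definition in_class_T (R : realType) (V : finType) (e : rel V) (w : {set V} -> R) : Prop :=
  is_tree e /\
  (forall E, is_edge e E -> w E != 0%R) /\
  (exists x, ~~ pendant e x) /\
  (forall x, ~~ pendant e x -> exists y, e x y && pendant e y).

(* Main.v *)
Require Import Defs.
From HB Require Import structures.
From mathcomp Require Import all_boot all_order all_algebra.
From mathcomp Require Import reals.
Set Implicit Arguments. Unset Strict Implicit. Unset Printing Implicit Defensive.

Lemma disjW (T : finType) (A B : {set T}) :
  (forall x, x \in A -> x \in B -> False) -> [disjoint A & B].
Proof.
move=> H; apply/pred0P => x /=; apply/negP => /andP [xA xB]; exact: H xA xB.
Qed.

Lemma pend_nb (V : finType) (e : rel V) : symmetric e ->
  forall u v, e v u -> pendant e u -> forall y, e u y -> y = v.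
Proof.
move=> sym u v evu; rewrite /pendant /degree => /cards1P [z Hz] y euy.
have: v \in [set y | e u y] by rewrite inE sym.
have: y \in [set y | e u y] by rewrite inE.
by rewrite Hz !inE => /eqP -> /eqP ->.
Qed.

Theorem corollary3p4 (R : realType) (V : finType) (e : rel V) (w : {set V} -> R) :
  @in_class_T R V e w ->
  forall (x0 : V) (p : seq V), alternating_path e x0 p -> size p <= 3.
Proof.
move=> [[[sym irr] _] [_ [_ pendH]]] x0 p [M [[[Medge Mdisj] Mmax] [/andP [Hu Hp] [_ Halt]]]].
rewrite leqNgt; apply/negP => Hsz.
case: p Hu Hp Halt Hsz => [|a [|b [|c [|d p']]]] //= Hu Hp Halt _.
have bcM : [set b; c] \in M by have := Halt 2 isT; rewrite /path_edge /= => ->.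
move: Hp => /and5P [_ eab ebc ecd _].
have ac : a != c by apply/eqP => ac; subst; move: Hu; rewrite !inE eqxx !orbT andbF.
have bd : b != d by apply/eqP => bd; subst; move: Hu; rewrite !inE eqxx !orbT !andbF.
have bc : b != c by apply/eqP => bc; subst; rewrite irr in ebc.
have npend : forall x y z, e x y -> e x z -> y != z -> ~~ pendant e x.
  move=> x y z exy exz yz; rewrite /pendant /degree; apply/negP => /eqP H1.
  have: #|[set y; z]| <= #|[set t | e x t]|.
    by apply: subset_leq_card; apply/subsetP => t; rewrite !inE => /orP [] /eqP ->.
  by rewrite H1 cards2 yz.
have eba : e b a by rewrite sym.
have ecb : e c b by rewrite sym.
have [ub /andP [ebu pu]] := pendH b (npend b a c eba ebc ac).
have [uc /andP [ecu pc]] := pendH c (npend c b d ecb ecd bd).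
have nbu := pend_nb sym ebu pu.
have ncu := pend_nb sym ecu pc.
have ubb : ub != b by apply/eqP => h; subst; rewrite irr in ebu.
have ucc : uc != c by apply/eqP => h; subst; rewrite irr in ecu.
have ubc : ub != c by apply/eqP => h; subst; move/eqP: bd; apply; symmetry; apply: nbu.
have ucb : uc != b by apply/eqP => h; subst; move/eqP: ac; apply; apply: ncu; rewrite sym.
have ubuc : ub != uc.
  apply/eqP => h; subst; move/eqP: bc; apply; symmetry; apply: nbu; rewrite sym.
  done.
have inbc : forall E x, E \in M -> x \in E -> x \in [set b; c] -> E = [set b; c].
  move=> E x EM xE xbc; apply/eqP; apply/negP => /negP ne.
  by rewrite (disjointFr (Mdisj _ _ EM bcM ne) xE) in xbc.
have nub : forall E, E \in M -> ub \notin E.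
  move=> E EM; apply/negP => uE.
  have [x [y /andP [exy /eqP EE]]] : exists x y, e x y && (E == [set x; y]).
    by have := Medge _ EM; rewrite /is_edge => /existsP [x /existsP [y H]]; exists x, y.
  have bE : b \in E.
    move: uE; rewrite EE !inE => /orP [] /eqP h.
      by rewrite -h in exy; rewrite (nbu _ exy) eqxx orbT.
    by rewrite -h in exy; rewrite -(nbu x) ?eqxx // sym.
  have := inbc _ _ EM bE; rewrite !inE eqxx => /(_ isT) h.
  by move: uE; rewrite h !inE (negbTE ubb) (negbTE ubc).
have nuc : forall E, E \in M -> uc \notin E.
  move=> E EM; apply/negP => uE.
  have [x [y /andP [exy /eqP EE]]] : exists x y, e x y && (E == [set x; y]).
    by have := Medge _ EM; rewrite /is_edge => /existsP [x /existsP [y H]]; exists x, y.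
  have cE : c \in E.
    move: uE; rewrite EE !inE => /orP [] /eqP h.
      by rewrite -h in exy; rewrite (ncu _ exy) eqxx orbT.
    by rewrite -h in exy; rewrite -(ncu x) ?eqxx // sym.
  have := inbc _ _ EM cE; rewrite !inE eqxx orbT => /(_ isT) h.
  by move: uE; rewrite h !inE (negbTE ucb) (negbTE ucc).
have other : forall F x, F \in M -> F != [set b; c] -> x \in F ->
    x \in [set ub; b] -> False.
  move=> F x FM Fne xF; rewrite !inE => /orP [] /eqP h; subst.
    by rewrite (negbTE (nub _ FM)) in xF.
  by move: Fne; rewrite (inbc _ _ FM xF) ?eqxx // !inE eqxx.
have otherc : forall F x, F \in M -> F != [set b; c] -> x \in F ->
    x \in [set uc; c] -> False.
  move=> F x FM Fne xF; rewrite !inE => /orP [] /eqP h; subst.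
    by rewrite (negbTE (nuc _ FM)) in xF.
  by move: Fne; rewrite (inbc _ _ FM xF) ?eqxx // !inE eqxx orbT.
pose M' := [set ub; b] |: ([set uc; c] |: (M :\ [set b; c])).
have mM' : matching e M'.
  split.
    move=> E; rewrite !inE => /or3P [/eqP -> | /eqP -> | /andP [_ EM]].
    - by apply/existsP; exists ub; apply/existsP; exists b; rewrite sym ebu eqxx.
    - by apply/existsP; exists uc; apply/existsP; exists c; rewrite sym ecu eqxx.
    - exact: Medge.
  move=> E F; rewrite !inE => HE HF EF; apply: disjW => x xE xF.
  case/or3P: HE => [/eqP hE | /eqP hE | /andP [EbC EM]];
  case/or3P: HF => [/eqP hF | /eqP hF | /andP [FbC FM]]; subst.
  - by rewrite eqxx in EF.
  - move: xE xF; rewrite !inE => /orP [] /eqP -> /orP [] /eqP h //; subst.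
    + by rewrite eqxx in ubuc.
    + by rewrite eqxx in ubc.
    + by rewrite eqxx in ucb.
    + by rewrite eqxx in bc.
  - exact: other FM FbC xF xE.
  - move: xE xF; rewrite !inE => /orP [] /eqP -> /orP [] /eqP h //; subst.
    + by rewrite eqxx in ubuc.
    + by rewrite eqxx in ucb.
    + by rewrite eqxx in ubc.
    + by rewrite eqxx in bc.
  - by rewrite eqxx in EF.
  - exact: otherc FM FbC xF xE.
  - exact: other EM EbC xE xF.
  - exact: otherc EM EbC xE xF.
  - by rewrite (disjointFr (Mdisj _ _ EM FM EF) xE) in xF.
have := Mmax _ mM'.
rewrite /M' cardsU1 cardsU1 [#|M|](cardsD1 [set b; c]) bcM.
have -> : [set uc; c] \notin M :\ [set b; c].
  by rewrite !inE negb_and; apply/orP; right; apply/negP => /nuc; rewrite !inE eqxx.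
have -> : [set ub; b] \notin [set uc; c] |: M :\ [set b; c].
  rewrite !inE negb_or; apply/andP; split.
  - apply/negP => /eqP h; have : ub \in [set uc; c] by rewrite -h !inE eqxx.
    by rewrite !inE (negbTE ubuc) (negbTE ubc).
  - by rewrite negb_and; apply/orP; right; apply/negP => /nub; rewrite !inE eqxx.
by rewrite addSn ltnn.
Qed.
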